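(* Let $\mathcal F$ be a finite family of nonempty subsets of $[r]$. Then $\Delta_{\mathcal F}$ equals the set of all $x\in\mathbb R^r$ with $x_i\ge0$ for all $i$, $x_1+\dots+x_r=|\mathcal F|$, and $$\sum_{i\in G}x_i\;\ge\;\bigl|\{F\in\mathcal F: F\subseteq G\}\bigr|\qquad\text{for all } G\subseteq[r].$$ Moreover, it suffices to impose these inequalities for the sets $G$ belonging to the building closure $\widehat{\mathcal F}$ of $\mathcal F$.
   Context: For $F\subseteq[r]$ nonempty, $\Delta_F=\{x\in\mathbb R^r_{\ge0}: \sum_i x_i=1,\ x_i=0 \text{ for } i\notin F\}=\operatorname{conv}\{e_i:i\in F\}$. For a family $\mathcal F$ of nonempty subsets of $[r]$, $\Delta_{\mathcal F}=\sum_{F\in\mathcal F}\Delta_F$ (Minkowski sum). The building closure $\widehat{\mathcal F}$ is the smallest family of subsets of $[r]$ containing $\mathcal F$ and all singletons such that $F\cup F'\in\widehat{\mathcal F}$ whenever $F,F'\in\widehat{\mathcal F}$ and $F\cap F'\ne\emptyset$. *)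

(* Defs.v *)
From HB Require Import structures.
From mathcomp Require Import all_boot all_order all_algebra.
From mathcomp Require Import reals.
Set Implicit Arguments. Unset Strict Implicit. Unset Printing Implicit Defensive.
Import Order.TTheory GRing.Theory Num.Theory.
Local Open Scope ring_scope.

(* Points of R^r are functions 'I_r -> R; [r] = {1..r} is modelled by 'I_r. *)

(* The simplex Delta_F = conv{e_i : i in F}. *)
Definition simplex (R : realType) (r : nat) (F : {set 'I_r}) (x : 'I_r -> R) : Prop :=
  (forall i, 0 <= x i) /\ \sum_i x i = 1 /\ (forall i, i \notin F -> x i = 0).

Definition minkowski_simplex (R : realType) (r : nat) (Fam : {set {set 'I_r}})
  (x : 'I_r -> R) : Prop :=
  exists y : {set 'I_r} -> 'I_r -> R,
    (forall F, F \in Fam -> simplex F (y F)) /\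
    (forall i, x i = \sum_(F in Fam) y F i).

Definition building_closed (r : nat) (B : {set {set 'I_r}}) : bool :=
  [forall F in B, forall G in B, (F :&: G != set0) ==> (F :|: G \in B)].

Definition building_closure (r : nat) (Fam : {set {set 'I_r}}) : {set {set 'I_r}} :=
  \bigcap_(B : {set {set 'I_r}} | [&& Fam \subset B, [forall i : 'I_r, [set i] \in B] & building_closed B]) B.

(* Main.v *)
Require Import Defs.
From HB Require Import structures.
From mathcomp Require Import all_boot all_order all_algebra.
From mathcomp Require Import reals ring lra zify.
Set Implicit Arguments. Unset Strict Implicit. Unset Printing Implicit Defensive.
Import Order.TTheory GRing.Theory Num.Theory.
Local Open Scope ring_scope.

Section Hall.
Variables (R : realType) (r : nat) (I : finType) (P : {set I}).

Definition sx (x : 'I_r -> R) (T : {set 'I_r}) := \sum_(l in T) x l.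
Definition Nm (A : I -> {set 'I_r}) (T : {set 'I_r}) : R :=
  \sum_(k in P) (A k :&: T != set0)%:R.
Definition cond A (x : 'I_r -> R) :=
  [/\ forall i, 0 <= x i, \sum_i x i = #|P|%:R & forall T, sx x T <= Nm A T].
Definition decomp (A : I -> {set 'I_r}) (x : 'I_r -> R) := exists y : I -> 'I_r -> R,
  (forall k, k \in P -> [/\ forall i, 0 <= y k i, \sum_i y k i = 1 &
      forall i, i \notin A k -> y k i = 0]) /\ forall i, x i = \sum_(k in P) y k i.

Lemma sxE x T : sx x T = \sum_l (if l \in T then x l else 0).
Proof. by rewrite /sx big_mkcond. Qed.

Lemma sxUI x T1 T2 : sx x (T1 :|: T2) + sx x (T1 :&: T2) = sx x T1 + sx x T2.
Proof.
rewrite !sxE -!big_split; apply: eq_bigr => l _; rewrite !inE.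
by case: (l \in T1); case: (l \in T2); rewrite /= ?addr0 ?add0r.
Qed.

Lemma sxT x : sx x setT = \sum_i x i.
Proof. by rewrite sxE; apply: eq_bigr => l _; rewrite inE. Qed.

Lemma sx_ge0 x T : (forall i, 0 <= x i) -> 0 <= sx x T.
Proof. by move=> H; apply: sumr_ge0 => i _. Qed.

Lemma Nm_le A T : Nm A T <= #|P|%:R.
Proof.
rewrite /Nm -sumr_const; apply: ler_sum => k _.
by case: (_ != _).
Qed.

Lemma submod A T1 T2 k0 : k0 \in P -> A k0 :&: T1 != set0 -> A k0 :&: T2 != set0 ->
  A k0 :&: (T1 :&: T2) == set0 ->
  Nm A (T1 :|: T2) + Nm A (T1 :&: T2) + 1 <= Nm A T1 + Nm A T2.
Proof.
move=> Pk0 h1 h2 h3; rewrite /Nm -!big_split /= (bigD1 k0) //= [X in _ <= X](bigD1 k0) //=.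
rewrite setIUr setU_eq0 (negbTE h1) (negbTE h2) h3 /=.
suff: \sum_(i in P | i != k0)
     ((A i :&: (T1 :|: T2) != set0)%:R + (A i :&: (T1 :&: T2) != set0)%:R) <=
  \sum_(i in P | i != k0) ((A i :&: T1 != set0)%:R + (A i :&: T2 != set0)%:R :> R) by lra.
apply: ler_sum => k _.
have: (A k :&: (T1 :&: T2) != set0) -> (A k :&: T1 != set0) && (A k :&: T2 != set0).
  move=> /set0Pn [l]; rewrite !inE => /and3P [a b c].
  by apply/andP; split; apply/set0Pn; exists l; rewrite inE ?a ?b ?c.
rewrite setIUr setU_eq0 negb_and.
case: (A k :&: T1 != set0); case: (A k :&: T2 != set0); case: (_ != set0) => //= H;
  try (by have := H isT); lra.
Qed.


Section Fold.
Variables (X : Type) (F : X -> R).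
Definition fm (s : seq X) := foldr (fun a acc => Num.max (F a) acc) 0 s.
Lemma fm_ge0 s : 0 <= fm s.
Proof. by elim: s => [|a s IH] //=; rewrite le_max IH orbT. Qed.
End Fold.
Lemma fm_ge (X : eqType) (F : X -> R) s a : a \in s -> F a <= fm F s.
Proof.
elim: s => [|b s IH] //=; rewrite in_cons => /orP [/eqP ->|h]; rewrite le_max ?lexx //.
by rewrite IH ?orbT.
Qed.
Lemma fm_le (X : eqType) (F : X -> R) s b : 0 <= b -> (forall a, a \in s -> F a <= b) -> fm F s <= b.
Proof.
move=> b0; elim: s => [|c s IH] //= H; rewrite ge_max H ?mem_head // IH //.
by move=> a h; apply: H; rewrite in_cons h orbT.
Qed.

Lemma sum_eq1 (T : {set 'I_r}) j : \sum_(l in T) (l == j)%:R = (j \in T)%:R :> R.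
Proof.
rewrite big_mkcond (bigD1 j) //= big1 ?addr0; first by rewrite eqxx; case: (j \in T).
by move=> l /negbTE ->; case: (_ \in _).
Qed.

Definition tmax A x k0 i : R := fm (fun T => 1 - (Nm A T - sx x T))
   (enum [pred T : {set 'I_r} | A k0 :&: T == [set i]]).
Definition Aset (A : I -> {set 'I_r}) k0 i := fun k => if k == k0 then A k0 :\ i else A k.
Definition xsh (x : 'I_r -> R) t i j := fun l => x l + t * ((l == j)%:R - (l == i)%:R).

Lemma sx_shift x t i j T : sx (xsh x t i j) T = sx x T + t * ((j \in T)%:R - (i \in T)%:R).
Proof.
rewrite /sx /xsh big_split /= -mulr_sumr sumrB !sum_eq1 //.
Qed.

Lemma Nm_set A k0 i T : Nm A T <= Nm (Aset A k0 i) T + (A k0 :&: T == [set i])%:R.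
Proof.
rewrite /Nm /Aset; case Pk0: (k0 \in P); last first.
  rewrite ler_wpDr //; apply: ler_sum => k kP; case: (k =P k0) => [e|//]; by move: kP; rewrite e Pk0.
rewrite (bigD1 k0) //= [X in _ <= X + _](bigD1 k0) //= eqxx.
have -> : \sum_(k in P | k != k0) ((if k == k0 then A k0 :\ i else A k) :&: T != set0)%:R
   = \sum_(k in P | k != k0) (A k :&: T != set0)%:R :> R.
  by apply: eq_bigr => k /andP [_ /negbTE ->].
suff: (A k0 :&: T != set0)%:R <= ((A k0 :\ i) :&: T != set0)%:R + (A k0 :&: T == [set i])%:R :> R by lra.
case h1: (A k0 :&: T != set0) => //=; last by rewrite addr_ge0 ?ler0n.
case h2: ((A k0 :\ i) :&: T != set0) => /=; first by rewrite ler_wpDr ?ler0n.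
have: A k0 :&: T \subset [set i].
  apply/subsetP => l; rewrite !inE => /andP [a b]; apply/negPn/negP => c.
  by move/negbT: h2; rewrite negbK => /eqP/setP/(_ l); rewrite !inE c a b.
by rewrite subset1 (negbTE h1) orbF => -> /=; lra.
Qed.

Lemma reduce A x k0 i j : cond A x -> k0 \in P -> i \in A k0 -> j \in A k0 -> i != j ->
  cond (Aset A k0 i) (xsh x (tmax A x k0 i) i j).
Proof.
case=> x0 xs xN Pk0 iA jA ij.
set t := tmax A x k0 i.
have f0 T : 0 <= Nm A T - sx x T by rewrite subr_ge0.
have tge0 : 0 <= t by apply: fm_ge0.
have tge T : A k0 :&: T == [set i] -> 1 - (Nm A T - sx x T) <= t.
  by move=> h; rewrite /t /tmax; apply: (@fm_ge _ (fun T => 1 - (Nm A T - sx x T))); rewrite mem_enum.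
have tle b : 0 <= b -> (forall T, A k0 :&: T == [set i] -> 1 - (Nm A T - sx x T) <= b) -> t <= b.
  by move=> b0 H; rewrite /t /tmax; apply: fm_le => // T; rewrite mem_enum; apply: H.
have key T T' : A k0 :&: T == [set i] -> A k0 :&: T' != set0 -> i \notin T' ->
    1 - (Nm A T - sx x T) <= Nm A T' - sx x T'.
  move=> /eqP hT hT' iT'.
  have m1 : A k0 :&: T != set0 by rewrite hT; apply/set0Pn; exists i; rewrite inE.
  have m2 : A k0 :&: (T :&: T') == set0.
    apply/eqP/setP => l; rewrite setIA hT !inE; apply/negP => /andP [/eqP e h].
    by rewrite -e h in iT'.
  have H := submod Pk0 m1 hT' m2.
  have := sxUI x T T'; have := xN (T :|: T'); have := xN (T :&: T'); lra.
have F2 T (T' : {set 'I_r}) : A k0 :&: T == [set i] -> j \in T' -> i \notin T' ->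
    1 - (Nm A T - sx x T) <= Nm A T' - sx x T'.
  move=> h jT iT'; apply: key => //; apply/set0Pn; exists j; by rewrite inE jA jT.
have F3 T : A k0 :&: T == [set i] -> 1 - (Nm A T - sx x T) <= x i.
  move=> h.
  have m : A k0 :&: (setT :\ i) != set0 by apply/set0Pn; exists j; rewrite !inE jA eq_sym ij.
  have n : i \notin setT :\ i by rewrite !inE eqxx.
  have := key T _ h m n.
  have e1 : (setT :\ i) :|: [set i] = setT :> {set 'I_r}.
    by apply/setP => l; rewrite !inE; case: eqP.
  have e2 : (setT :\ i) :&: [set i] = set0 :> {set 'I_r}.
    by apply/setP => l; rewrite !inE; case: eqP.
  have s0 : sx x set0 = 0 by rewrite /sx big_set0.
  have s1 : sx x [set i] = x i by rewrite /sx big_set1.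
  have := sxUI x (setT :\ i) [set i]; rewrite e1 e2 s0 s1 sxT xs.
  have := Nm_le A (setT :\ i); lra.
have ti : t <= x i by apply: tle => //; exact: F3.
split.
- move=> l; rewrite /xsh; have := x0 l.
  case li: (l == i); case lj: (l == j) => /=; try lra.
  by move/eqP: li => ->; lra.
- by rewrite -sxT sx_shift !inE /= sxT xs subrr mulr0 addr0.
move=> T; rewrite sx_shift; have := Nm_set A k0 i T; have := xN T.
case E: (A k0 :&: T == [set i]) => /=.
  have iT : i \in T by move/eqP/setP: E => /(_ i); rewrite !inE eqxx => /andP [].
  have jT : j \notin T.
    apply/negP => jT; move/eqP/setP: E => /(_ j); rewrite !inE jA jT /= => /esym/eqP e.
    by rewrite e eqxx in ij.
  by rewrite iT (negbTE jT) /=; have := tge T E; lra.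
case jT: (j \in T); case iT: (i \in T) => /=; move=> h1 h2; try lra.
have := tle (Nm A T - sx x T) (f0 T) (fun T0 h => F2 T0 T h jT (negbT iT)); lra.
Qed.

Lemma decomp_mono (A A' : I -> {set 'I_r}) x : (forall k, A' k \subset A k) ->
  decomp A' x -> decomp A x.
Proof.
move=> sub [y [Hy Hx]]; exists y; split=> // k kP; have [a b c] := Hy k kP; split=> // l lA.
by apply: c; apply/negP => h; move/negP: lA; apply; apply: (subsetP (sub k)).
Qed.

Lemma decomp_ext A (x x' : 'I_r -> R) : x =1 x' -> decomp A x' -> decomp A x.
Proof. by move=> e [y [Hy Hx]]; exists y; split=> // l; rewrite e. Qed.

Lemma decomp_conv A (x x1 x2 : 'I_r -> R) a b : 0 <= a -> 0 <= b -> a + b = 1 ->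
  (forall l, x l = a * x1 l + b * x2 l) -> decomp A x1 -> decomp A x2 -> decomp A x.
Proof.
move=> a0 b0 ab ex [y1 [H1 X1]] [y2 [H2 X2]].
exists (fun k l => a * y1 k l + b * y2 k l); split.
  move=> k kP; have [p1 q1 r1] := H1 k kP; have [p2 q2 r2] := H2 k kP; split.
  - by move=> l; apply: addr_ge0; apply: mulr_ge0.
  - by rewrite big_split /= -!mulr_sumr q1 q2 !mulr1.
  - by move=> l lA; rewrite r1 // r2 // !mulr0 addr0.
by move=> l; rewrite ex X1 X2 big_split /= -!mulr_sumr.
Qed.

Lemma sum_mem (S : {set 'I_r}) : \sum_l (l \in S)%:R = #|S|%:R :> R.
Proof.
rewrite -sumr_const [RHS]big_mkcond /=; apply: eq_bigr => l _; by case: (l \in S).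
Qed.

Lemma meet1 (S : {set 'I_r}) l : (S :&: [set l] != set0) = (l \in S).
Proof.
apply/set0Pn/idP => [[m]|h]; first by rewrite !inE => /andP [h /eqP <-].
by exists l; rewrite !inE h eqxx.
Qed.

Lemma base (A : I -> {set 'I_r}) x : (forall k, k \in P -> #|A k| <= 1)%N -> cond A x -> decomp A x.
Proof.
move=> A1 [x0 xs xN].
have xl l : x l <= \sum_(k in P) (l \in A k)%:R.
  have := xN [set l]; rewrite /sx big_set1 /Nm.
  by under eq_bigr do rewrite meet1.
have E : \sum_l \sum_(k in P) (l \in A k)%:R = \sum_(k in P) #|A k|%:R :> R.
  by rewrite exchange_big /=; apply: eq_bigr => k _; rewrite sum_mem.
have E2 : \sum_(k in P) #|A k|%:R <= #|P|%:R :> R.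
  by rewrite -sumr_const; apply: ler_sum => k kP; rewrite lern1 A1.
have S1 : \sum_l (x l) <= \sum_l \sum_(k in P) (l \in A k)%:R by apply: ler_sum => l _.
have Z1 : \sum_l (\sum_(k in P) (l \in A k)%:R - x l) = 0.
  by rewrite sumrB; lra.
have Z2 : \sum_(k in P) (1 - #|A k|%:R) = 0 :> R.
  by rewrite sumrB sumr_const; lra.
have e1 l : \sum_(k in P) (l \in A k)%:R - x l = 0.
  by apply: (psumr_eq0P _ Z1) => // m _; rewrite subr_ge0.
have e2 k : k \in P -> 1 - #|A k|%:R = 0 :> R.
  by move=> kP; apply: (psumr_eq0P _ Z2) => // m mP; rewrite subr_ge0 lern1 A1.
exists (fun k l => (l \in A k)%:R); split.
  move=> k kP; split.
  - by move=> l; rewrite ler0n.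
  - by rewrite sum_mem; apply/eqP; rewrite eq_sym -subr_eq0 e2.
  - by move=> l /negbTE ->.
by move=> l; apply/eqP; rewrite eq_sym -subr_eq0 e1.
Qed.

Lemma hall_ind n (A : I -> {set 'I_r}) x : (\sum_(k in P) #|A k| <= n)%N -> cond A x -> decomp A x.
Proof.
elim: n A x => [|n IH] A x hn hc.
  apply: base hc => k kP.
  have h : (#|A k| <= \sum_(k in P) #|A k|)%N by rewrite (bigD1 k) //= leq_addr.
  by apply: leq_trans h (leq_trans hn _).
case: (boolP [exists k, [exists i, [exists j, [&& k \in P, i \in A k, j \in A k & i != j]]]])
  => [/existsP [k0 /existsP [i /existsP [j /and4P [Pk0 iA jA ij]]]]|nex]; last first.
  apply: base hc => k kP; apply/card_le1_eqP => a b aA bA.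
  apply/eqP/negPn/negP => ab; move/negP: nex; apply; apply/existsP; exists k.
  by apply/existsP; exists b; apply/existsP; exists a; rewrite kP aA bA ab.
have hm i' : i' \in A k0 -> (\sum_(k in P) #|Aset A k0 i' k| <= n)%N.
  move=> iA'; move: hn; rewrite (bigD1 k0) //= [X in _ -> (X <= _)%N](bigD1 k0) //= /Aset eqxx.
  have -> : (\sum_(k in P | k != k0) #|if k == k0 then A k0 :\ i' else A k| =
            \sum_(k in P | k != k0) #|A k|)%N.
    by apply: eq_bigr => k /andP [_ /negbTE ->].
  rewrite (cardsD1 i' (A k0)) iA' /=. lia.
have sub i' : forall k, Aset A k0 i' k \subset A k.
  by move=> k; rewrite /Aset; case: eqP => [->|_]; [apply: subsetDl|apply: subxx].
have d1 := decomp_mono (sub i) (IH _ _ (hm i iA) (reduce hc Pk0 iA jA ij)).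
have d2 := decomp_mono (sub j) (IH _ _ (hm j jA) (reduce hc Pk0 jA iA (ltac:(by rewrite eq_sym)))).
set t := tmax A x k0 i in d1; set s := tmax A x k0 j in d2.
have t0 : 0 <= t by apply: fm_ge0.
have s0 : 0 <= s by apply: fm_ge0.
case: (eqVneq (s + t) 0) => [st0|st].
  have tz : t = 0 by lra.
  by apply: decomp_ext d1 => l; rewrite /xsh tz mul0r addr0.
apply: (decomp_conv (a := s / (s + t)) (b := t / (s + t))) d1 d2.
- by apply: divr_ge0 => //; apply: addr_ge0.
- by apply: divr_ge0 => //; apply: addr_ge0.
- by rewrite -mulrDl divff.
by move=> l; rewrite /xsh; field.
Qed.

Lemma decomp_cond (A : I -> {set 'I_r}) x : decomp A x -> cond A x.
Proof.
move=> [y [Hy Hx]]; split.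
- by move=> l; rewrite Hx; apply: sumr_ge0 => k kP; have [] := Hy k kP.
- under eq_bigr do rewrite Hx.
  rewrite exchange_big /= -sumr_const; apply: eq_bigr => k kP.
  by have [] := Hy k kP.
move=> T; rewrite /sx /Nm; under eq_bigr do rewrite Hx.
rewrite exchange_big /=; apply: ler_sum => k kP; have [p q z] := Hy k kP.
case: (boolP (A k :&: T != set0)) => h /=.
  rewrite -q big_mkcond /=; apply: ler_sum => l _; case: (l \in T) => //.
rewrite big1 // => l lT; apply: z; apply/negP => lA; move/negPn/eqP/setP: h => /(_ l).
by rewrite !inE lA lT.
Qed.

End Hall.

Section Final.
Variables (R : realType) (r : nat) (Fam : {set {set 'I_r}}).
Hypothesis Fne : forall F, F \in Fam -> F != set0.

Definition cnt (G : {set 'I_r}) : R := \sum_(F in Fam) (F \subset G)%:R.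

Lemma cardE_R (G : {set 'I_r}) : #|[set F in Fam | F \subset G]|%:R = cnt G.
Proof.
rewrite /cnt -sumr_const big_mkcond [RHS]big_mkcond /=; apply: eq_bigr => F _.
by rewrite inE; case: (F \in Fam); case: (F \subset G).
Qed.

Lemma ms_decomp (x : 'I_r -> R) : minkowski_simplex Fam x <-> decomp Fam (fun F => F) x.
Proof.
split=> [[y [Hy Hx]]|[y [Hy Hx]]]; exists y; split=> // F FP.
  by have [a [b c]] := Hy F FP; split.
by have [a b c] := Hy F FP; split.
Qed.

Lemma sx_compl (x : 'I_r -> R) G : sx x (~: G) = \sum_i x i - sx x G.
Proof.
have := sxUI x G (~: G); rewrite setUCr setICr sxT /sx big_set0.
by rewrite /sx => h; lra.
Qed.

Lemma Nm_compl G : @Nm R r _ Fam (fun F => F) (~: G) = #|Fam|%:R - cnt G :> R.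
Proof.
rewrite /Nm /cnt -sumr_const -sumrB; apply: eq_bigr => F _.
by rewrite -setDE setD_eq0; case: (F \subset G) => /=; rewrite ?subr0 ?subrr.
Qed.

Lemma cond_iff (x : 'I_r -> R) : cond Fam (fun F => F) x <->
  [/\ forall i, 0 <= x i, \sum_i x i = #|Fam|%:R & forall G, cnt G <= sx x G].
Proof.
split=> [[a b c]|[a b c]]; split=> // G.
  by have := c (~: G); rewrite sx_compl Nm_compl b; lra.
by rewrite -[G]setCK sx_compl Nm_compl b; have := c (~: G); lra.
Qed.

Lemma part1 (x : 'I_r -> R) : minkowski_simplex Fam x <->
  [/\ forall i, 0 <= x i, \sum_i x i = #|Fam|%:R & forall G, cnt G <= sx x G].
Proof.
rewrite ms_decomp -cond_iff; split; first exact: decomp_cond.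
exact: (@hall_ind R r _ Fam (\sum_(k in Fam) #|k|)).
Qed.

Let B := building_closure Fam.

Lemma B1 F : F \in Fam -> F \in B.
Proof. by move=> FP; apply/bigcapP => C /and3P [h _ _]; apply: (subsetP h). Qed.

Lemma B2 i : [set i] \in B.
Proof. by apply/bigcapP => C /and3P [_ /forallP h _]; apply: h. Qed.

Lemma B3 F G : F \in B -> G \in B -> F :&: G != set0 -> F :|: G \in B.
Proof.
move=> /bigcapP hF /bigcapP hG FG; apply/bigcapP => C hC.
have FC := hF C hC; have GC := hG C hC.
case/and3P: hC => _ _ /forall_inP /(_ F FC) /forall_inP /(_ G GC) /implyP; exact.
Qed.

Lemma bld (x : 'I_r -> R) : (forall i, 0 <= x i) ->
  (forall G, G \in B -> cnt G <= sx x G) -> forall G, cnt G <= sx x G.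
Proof.
move=> x0 hB.
suff: forall m (G : {set 'I_r}), (#|G| < m)%N -> cnt G <= sx x G by move=> h G; apply: (h #|G|.+1).
elim=> [//|m IH] G hG; move: G hG => G hG.
case: (set_0Vmem G) => [->|[i iG]].
  rewrite /cnt /sx big_set0 big1 // => F FP; rewrite subset0.
  by rewrite (negbTE (Fne FP)).
pose Pr := [pred H : {set 'I_r} | [&& H \in B, i \in H & H \subset G]].
have Pi : Pr [set i] by rewrite /= B2 set11 sub1set iG.
case: (@arg_maxnP _ [set i] Pr (fun H => #|H|) Pi) => H /and3P [HB iH HG] Hmax.
have hsplit F : F \in Fam -> F \subset G -> (F \subset H) || (F \subset G :\: H).
  move=> FP FG; case: (boolP (F :&: H != set0)) => h.
    have U : Pr (F :|: H).
      by apply/and3P; split; [apply: B3 => //; apply: B1 | rewrite inE iH orbT | rewrite subUset FG HG].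
    have := Hmax _ U; rewrite /= => le.
    have : H == F :|: H by rewrite eqEcard subsetUr le.
    by move/eqP => ->; rewrite subsetUl.
  apply/orP; right; apply/subsetP => l lF; rewrite inE (subsetP FG) // andbT.
  apply/negP => lH; move/negPn/eqP/setP: h => /(_ l); by rewrite !inE lF lH.
have c1 : cnt G <= cnt H + cnt (G :\: H).
  rewrite /cnt -big_split /=; apply: ler_sum => F FP.
  case: (boolP (F \subset G)) => FG; last by rewrite addr_ge0 ?ler0n.
  by case/orP: (hsplit F FP FG) => -> /=; rewrite ?lerDl ?lerDr ?ler0n.
have c2 := hB H HB.
have c3 : cnt (G :\: H) <= sx x (G :\: H).
  have pc : (#|G :\: H| < #|G|)%N.
    apply: proper_card; apply/properP; split; first by apply: subsetDl.
    by exists i => //; rewrite inE iH.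
  by apply: IH; lia.
have : sx x G = sx x H + sx x (G :\: H).
  have := sxUI x H (G :\: H).
  have -> : H :|: G :\: H = G.
    apply/setP => l; rewrite !inE; case lH: (l \in H) => //=.
    by rewrite (subsetP HG).
  have -> : H :&: (G :\: H) = set0.
    by apply/setP => l; rewrite !inE; case: (l \in H); rewrite ?andbF.
  by rewrite /sx big_set0 addr0.
lra.
Qed.

End Final.

Unset Implicit Arguments.

Theorem proposition3p12 (R : realType) (r : nat) (Fam : {set {set 'I_r}}) :
  (forall F, F \in Fam -> F != set0) ->
  (forall x : 'I_r -> R,
     minkowski_simplex Fam x <->
     [/\ (forall i, 0 <= x i), \sum_i x i = #|Fam|%:R &
         forall G : {set 'I_r},
           #|[set F in Fam | F \subset G]|%:R <= \sum_(i in G) x i]) /\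
  (forall x : 'I_r -> R,
     minkowski_simplex Fam x <->
     [/\ (forall i, 0 <= x i), \sum_i x i = #|Fam|%:R &
         forall G : {set 'I_r}, G \in building_closure Fam ->
           #|[set F in Fam | F \subset G]|%:R <= \sum_(i in G) x i]).
Proof.
move=> Fne.
have P1 (x : 'I_r -> R) : minkowski_simplex Fam x <->
     [/\ (forall i, 0 <= x i), \sum_i x i = #|Fam|%:R &
         forall G : {set 'I_r},
           #|[set F in Fam | F \subset G]|%:R <= \sum_(i in G) x i].
  rewrite part1; split=> -[a b c]; split=> // G.
    by rewrite cardE_R; apply: c.
  by rewrite -cardE_R; apply: c.
split=> // x; rewrite P1; split=> -[a b c]; split=> // G.
rewrite cardE_R; apply: (bld Fne a) => H HB; rewrite -cardE_R; exact: c.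
Qed.
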